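(* Let $n,v\ge1$, $\mathcal{R}=\mathbb{F}_q[x_1,\dots,x_v]/\langle x_1^{i_1}\cdots x_v^{i_v}\mid i_1+\dots+i_v=n\rangle$, and let $I$ be an ideal of $\mathcal{R}$. Then the number of additive characters $\psi$ on $\mathcal{R}$ such that $I$ is the ideal maximally contained in $\ker(\psi)$ (i.e. $I$ is contained in $\ker\psi$ and contains every ideal of $\mathcal{R}$ contained in $\ker\psi$) is \[ \frac{|\mathcal{R}|}{|I|}\cdot\begin{cases}1 & \dim(\operatorname{Soc}(\mathcal{R}/I))=0,\\ 1-\frac1q & \dim(\operatorname{Soc}(\mathcal{R}/I))=1,\\ 0 & \text{otherwise.}\end{cases} \]
   Context: The socle $\operatorname{Soc}(\mathcal{R}/I)$ is the $\mathbb{F}_q$-subspace $\{f\in\mathcal{R}/I\mid x_1f=0,\dots,x_vf=0\}$ of $\mathcal{R}/I$, and $\dim$ denotes dimension over $\mathbb{F}_q$. An additive character is a homomorphism from $(\mathcal{R},+)$ to the complex unit circle. *)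

(* Defs.v *)
From HB Require Import structures.
From mathcomp Require Import all_boot all_order all_algebra all_field.
Set Implicit Arguments. Unset Strict Implicit. Unset Printing Implicit Defensive.
Import Order.TTheory GRing.Theory Num.Theory.
Local Open Scope ring_scope.

Section TruncPoly.
Variables (F : finFieldType) (v n : nat).

Definition mono := {e : {ffun 'I_v -> 'I_n} | (\sum_i (e i : nat) < n)%N}.

(* R = F_q[x_1..x_v] / <monomials of degree n>, represented by the F-basis of
   monomials of degree < n: an element is its coefficient function. *)
Definition Rq := {ffun mono -> F^o}.

Definition Rmul (f g : Rq) : Rq :=
  [ffun m : mono => \sum_(a : mono) \sum_(b : mono |
      [forall i, ((val a i : nat) + val b i)%N == val m i]) f a * g b].

Definition Rvar (i : 'I_v) : Rq :=
  [ffun m : mono => if [forall j, (val m j : nat) == (j == i)] then 1 else 0].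

Definition is_ideal (J : {set Rq}) : Prop :=
  [/\ 0 \in J,
      (forall x y, x \in J -> y \in J -> x - y \in J) &
      (forall r x, x \in J -> Rmul r x \in J)].

Definition is_add_char (psi : {ffun Rq -> algC}) : Prop :=
  (forall x, `|psi x| = 1) /\ (forall x y, psi (x + y) = psi x * psi y).

Definition in_ker (psi : {ffun Rq -> algC}) (x : Rq) : Prop := psi x = 1.

Definition max_ideal_in_ker (I : {set Rq}) (psi : {ffun Rq -> algC}) : Prop :=
  (forall x, x \in I -> in_ker psi x) /\
  (forall J, is_ideal J -> (forall x, x \in J -> in_ker psi x) -> J \subset I).

(* preimage in R of Soc(R/I) *)
Definition soc_pre (I : {set Rq}) : {set Rq} :=
  [set f | [forall i, Rmul (Rvar i) f \in I]].

(* dim_F Soc(R/I) = dim_F (soc_pre I) - dim_F I, since Soc(R/I) = soc_pre I / I *)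
Definition dim_soc (I : {set Rq}) : nat :=
  (\dim <<enum (soc_pre I)>>%VS - \dim <<enum I>>%VS)%N.

End TruncPoly.

(* Main.v *)
Require Import Defs.
From mathcomp Require Import all_boot all_order all_algebra all_field.
From mathcomp Require Import zify.
Import GRing.Theory Num.Theory.
Local Open Scope ring_scope.
Set Implicit Arguments. Unset Strict Implicit. Unset Printing Implicit Defensive.

Section Alg.
Variables (F : finFieldType) (v n : nat).
Local Notation mono := (mono v n).
Local Notation Rq := (Rq F v n).

Lemma scaleE (c : F) (f : Rq) m : (c *: f) m = c * f m.
Proof. by rewrite /GRing.scale /= ffunE. Qed.

Lemma subE (f g : Rq) m : (f - g) m = f m - g m.
Proof. by rewrite /= !ffunE. Qed.
Lemma zeroE m : (0 : Rq) m = 0.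
Proof. by rewrite ffunE. Qed.

Definition deg (m : mono) : nat := (\sum_i (val m i : nat))%N.

Definition mle (a k : mono) := [forall i, (val a i : nat) <= val k i]%N.

Definition subf (k a : mono) : {ffun 'I_v -> 'I_n} :=
  [ffun i => Ordinal (leq_ltn_trans (leq_subr (val a i) (val k i)) (ltn_ord (val k i)))].

Lemma subf_deg k a : (\sum_i (subf k a i : nat) < n)%N.
Proof.
apply: leq_ltn_trans (valP k); apply: leq_sum => i _.
by rewrite ffunE /= leq_subr.
Qed.

Definition sub_mono (k a : mono) : mono := exist _ (subf k a) (subf_deg k a).

Lemma sub_monoE k a i : (val (sub_mono k a) i : nat) = (val k i - val a i)%N.
Proof. by rewrite /= ffunE. Qed.

Lemma mono_eq (a b : mono) : (forall i, (val a i : nat) = val b i) -> a = b.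
Proof. by move=> H; apply: val_inj; apply/ffunP => i; apply: val_inj; apply: H. Qed.

Lemma sum_pairs (a k : mono) (G : mono -> F) :
  \sum_(b : mono | [forall i, ((val a i : nat) + val b i)%N == val k i]) G b =
  if mle a k then G (sub_mono k a) else 0.
Proof.
case: ifP => Hle.
  rewrite (big_pred1 (sub_mono k a)) // => b /=.
  apply/forallP/eqP => [H|->{b} i].
    apply: mono_eq => i; rewrite sub_monoE; move/eqP: (H i) => <-; exact: (esym (addKn _ _)).
  rewrite sub_monoE; move/forallP: Hle => /(_ i) Hi; exact/eqP/subnKC.
rewrite big1 // => b /forallP H; exfalso; move/negP: Hle; apply.
by apply/forallP => i; move/eqP: (H i) => <-; rewrite leq_addr.
Qed.

Lemma RmulE (f g : Rq) k : Rmul f g k =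
  \sum_a f a * (if mle a k then g (sub_mono k a) else 0).
Proof.
rewrite ffunE; apply: eq_bigr => a _.
by rewrite -mulr_sumr sum_pairs.
Qed.

Definition delta (m : mono) : Rq := [ffun k => if k == m then 1 else 0].

Lemma Rmul_delta m (f : Rq) k : Rmul (delta m) f k = if mle m k then f (sub_mono k m) else 0.
Proof.
rewrite RmulE (bigD1 m) //= big1 ?addr0 => [|a /negbTE nam]; first by rewrite ffunE eqxx mul1r.
by rewrite ffunE nam mul0r.
Qed.

Lemma RmulBr (r x y : Rq) : Rmul r (x - y) = Rmul r x - Rmul r y.
Proof.
apply/ffunP => k; rewrite subE !RmulE -sumrB; apply: eq_bigr => a _.
by case: ifP; rewrite ?subE ?mulr0 ?subr0 // mulrBr.
Qed.

Lemma Rmul0r (r : Rq) : Rmul r 0 = 0.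
Proof. by have := RmulBr r 0 0; rewrite !subrr. Qed.

Lemma RmulZr (r : Rq) c (x : Rq) : Rmul r (c *: x) = c *: Rmul r x.
Proof.
apply/ffunP => k; rewrite scaleE !RmulE mulr_sumr; apply: eq_bigr => a _.
by case: ifP; rewrite ?scaleE ?mulr0 //; rewrite mulrCA.
Qed.

Lemma RmulZl (r : Rq) c (x : Rq) : Rmul (c *: r) x = c *: Rmul r x.
Proof.
apply/ffunP => k; rewrite scaleE !RmulE mulr_sumr; apply: eq_bigr => a _.
by rewrite scaleE mulrA.
Qed.

Lemma Rmul_sum (r x : Rq) : Rmul r x = \sum_m r m *: Rmul (delta m) x.
Proof.
apply/ffunP => k; rewrite RmulE sum_ffunE; apply: eq_bigr => a _.
by rewrite scaleE Rmul_delta.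
Qed.


Lemma Rmul_mulr (I : {set Rq}) (r x : Rq) : is_ideal I -> x \in I -> Rmul r x \in I.
Proof. by case=> _ _; apply. Qed.

Lemma ideal0 (I : {set Rq}) : is_ideal I -> 0 \in I.
Proof. by case. Qed.

Lemma idealB (I : {set Rq}) x y : is_ideal I -> x \in I -> y \in I -> x - y \in I.
Proof. by case=> _ H _; apply: H. Qed.

Lemma idealN (I : {set Rq}) x : is_ideal I -> x \in I -> - x \in I.
Proof. by move=> HI xI; rewrite -sub0r idealB // ideal0. Qed.

Lemma idealD (I : {set Rq}) x y : is_ideal I -> x \in I -> y \in I -> x + y \in I.
Proof. by move=> HI xI yI; rewrite -[y]opprK idealB // idealN. Qed.

Lemma ideal_sum (I : {set Rq}) (T : finType) (P : pred T) (G : T -> Rq) :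
  is_ideal I -> (forall t, P t -> G t \in I) -> \sum_(t | P t) G t \in I.
Proof.
move=> HI HG; apply: (big_ind (fun x => x \in I)); first exact: ideal0.
  by move=> x y; apply: idealD.
exact: HG.
Qed.

Definition low (f : Rq) d := forall k, (deg k < d)%N -> f k = 0.

Lemma low_n (f : Rq) : low f n -> f = 0.
Proof. by move=> H; apply/ffunP => k; rewrite zeroE; apply: H; exact: valP k. Qed.

Lemma low_mono (f : Rq) d d' : (d' <= d)%N -> low f d -> low f d'.
Proof. by move=> Hd H k Hk; apply: H; apply: leq_trans Hk Hd. Qed.

Lemma RvarE i (f : Rq) k : Rmul (Rvar F n i) f k =
  \sum_(a : mono | [forall j, (val a j : nat) == (j == i)]) (if mle a k then f (sub_mono k a) else 0).
Proof.
rewrite RmulE [RHS]big_mkcond; apply: eq_bigr => a _.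
by rewrite ffunE; case: ifP => _; rewrite ?mul1r ?mul0r.
Qed.

Lemma deg_sub k a : mle a k -> (deg (sub_mono k a) + deg a)%N = deg k.
Proof.
move/forallP => H; rewrite /deg -big_split /=; apply: eq_bigr => j _.
by rewrite ffunE /= subnK // H.
Qed.

Lemma sum_eqi i : (\sum_(j < v) (j == i : nat))%N = 1%N.
Proof. by rewrite (bigD1 i) //= eqxx big1 // => j /negbTE ->. Qed.

Lemma low_Rvar i (f : Rq) d : low f d -> low (Rmul (Rvar F n i) f) d.+1.
Proof.
move=> Hf k Hk; rewrite RvarE big1 // => a /forallP Ha; case: ifP => // Hle.
apply: Hf; have := deg_sub Hle.
have -> : deg a = 1%N by rewrite /deg -(sum_eqi i); apply: eq_bigr => j _; apply/eqP.
lia.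
Qed.

Lemma descent (I J : {set Rq}) b : is_ideal I -> is_ideal J -> b \in J -> b \notin I ->
  exists a, [/\ a \in J, a \notin I & forall i, Rmul (Rvar F n i) a \in I].
Proof.
move=> HI HJ.
suff H : forall k b, b \in J -> b \notin I -> low b (n - k) ->
  exists a, [/\ a \in J, a \notin I & forall i, Rmul (Rvar F n i) a \in I].
  by move=> bJ bI; apply: (H n b bJ bI) => k; rewrite subnn.
elim=> [|k IH] {}b bJ bI lb.
  by rewrite subn0 in lb; move: bI; rewrite (low_n lb) ideal0.
case: (boolP [forall i, Rmul (Rvar F n i) b \in I]) => [/forallP H|]; first by exists b.
rewrite negb_forall => /existsP [i Hi].
apply: (IH (Rmul (Rvar F n i) b)) => //; first exact: Rmul_mulr.
apply: (low_mono (d := (n - k.+1).+1)); first lia.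
exact: low_Rvar.
Qed.

Section Hn.
Hypothesis Hn : (0 < n)%N.

Definition ffun0 : {ffun 'I_v -> 'I_n} := [ffun _ => Ordinal Hn].
Lemma ffun0_deg : (\sum_i (ffun0 i : nat) < n)%N.
Proof. by rewrite big1 // => i _; rewrite ffunE. Qed.
Definition mono0 : mono := exist _ ffun0 ffun0_deg.

Lemma mono0E i : (val mono0 i : nat) = 0%N.
Proof. by rewrite /= ffunE. Qed.

Lemma Rmul1 (x : Rq) : Rmul (delta mono0) x = x.
Proof.
apply/ffunP => k; rewrite Rmul_delta.
have -> : mle mono0 k by apply/forallP => i; rewrite mono0E.
by congr (x _); apply: mono_eq => i; rewrite sub_monoE mono0E subn0.
Qed.

Lemma idealZ (I : {set Rq}) c x : is_ideal I -> x \in I -> c *: x \in I.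
Proof. by move=> HI xI; rewrite -(Rmul1 x) -RmulZl Rmul_mulr. Qed.

Lemma mono_neq0 (m : mono) : m != mono0 -> exists i, (val m i : nat) != 0%N.
Proof.
move=> Hm; case: (boolP [exists i, (val m i : nat) != 0%N]) => [/existsP//|].
rewrite negb_exists => /forallP H; case/eqP: Hm; apply: mono_eq => i.
by rewrite mono0E; apply/eqP; rewrite -[_ == _]negbK H.
Qed.

Section Ei.
Variables (i : 'I_v) (Hn2 : (1 < n)%N).
Definition ffe : {ffun 'I_v -> 'I_n} :=
  [ffun j => Ordinal (leq_ltn_trans (leq_b1 (j == i)) Hn2)].
Lemma ffe_deg : (\sum_j (ffe j : nat) < n)%N.
Proof.
rewrite (eq_bigr (fun j => (j == i : nat))) ?sum_eqi // => j _.
by rewrite ffunE.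
Qed.
Definition emono : mono := exist _ ffe ffe_deg.
Lemma emonoE j : (val emono j : nat) = (j == i).
Proof. by rewrite /= ffunE. Qed.

Lemma Rvar_delta : Rvar F n i = delta emono.
Proof.
apply/ffunP => k; rewrite !ffunE; congr (if _ then _ else _).
apply/forallP/eqP => [H|-> j]; last by rewrite emonoE.
by apply: mono_eq => j; rewrite emonoE; apply/eqP.
Qed.
End Ei.

Lemma delta_split (m : mono) i (Hn2 : (1 < n)%N) (a : Rq) :
  (val m i : nat) != 0%N ->
  Rmul (delta m) a = Rmul (delta (sub_mono m (emono i Hn2))) (Rmul (delta (emono i Hn2)) a).
Proof.
move=> Hmi.
have He j : ((j == i : nat) <= val m j)%N.
  by case: eqP => [->|]; rewrite ?lt0n.
apply/ffunP => k; rewrite !Rmul_delta.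
case: (boolP (mle m k)) => /forallP H.
  have H1 : mle (sub_mono m (emono i Hn2)) k.
    by apply/forallP => j; rewrite !sub_monoE !emonoE; have := H j; have := He j; lia.
  have H2 : mle (emono i Hn2) (sub_mono k (sub_mono m (emono i Hn2))).
    by apply/forallP => j; rewrite !sub_monoE !emonoE; have := H j; have := He j; lia.
  rewrite H1 H2; congr (a _); apply: mono_eq => j.
  rewrite !sub_monoE !emonoE; have := H j; have := He j; lia.
case: ifP => // /forallP H1; case: ifP => // /forallP H2; exfalso; apply: H => j.
have := H1 j; have := H2 j; rewrite !sub_monoE !emonoE; have := He j; lia.
Qed.

Lemma socle_delta (I : {set Rq}) (a : Rq) (m : mono) : is_ideal I ->
  (forall i, Rmul (Rvar F n i) a \in I) -> m != mono0 -> Rmul (delta m) a \in I.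
Proof.
move=> HI Ha /mono_neq0 [i Hi].
have Hn2 : (1 < n)%N.
  have := valP m; rewrite -/(deg m) => Hd.
  have : (val m i <= deg m)%N by rewrite /deg (bigD1 i) //= leq_addr.
  lia.
rewrite (delta_split Hn2 a Hi) -Rvar_delta; apply: Rmul_mulr => //.
Qed.

Lemma socle_mul (I : {set Rq}) (a r : Rq) : is_ideal I ->
  (forall i, Rmul (Rvar F n i) a \in I) -> Rmul r a - r mono0 *: a \in I.
Proof.
move=> HI Ha; rewrite Rmul_sum (bigD1 mono0) //= Rmul1 addrC addrK.
apply: ideal_sum => // m Hm; apply: idealZ => //; exact: socle_delta.
Qed.

End Hn.
End Alg.


Lemma valFpD p (pr : prime p) (a b : 'F_p) : (val (a + b)%R = (val a + val b) %% p)%N.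
Proof. exact: (congr1 (modn _) (Fp_cast pr)). Qed.

Lemma chi0_exists (F : finFieldType) : exists chi : F -> algC,
  [/\ forall s t, chi (s + t) = chi s * chi t, forall t, `|chi t| = 1 &
      exists u, chi u != 1].
Proof.
have [p pr_p charFp] := finPcharP F.
pose K := pPrimeCharType charFp.
have dim_gt0 : (0 < \dim (fullv : {vspace K}))%N.
  rewrite lt0n dimv_eq0; apply/negP => /eqP H.
  have := memvf (1 : K); rewrite H memv0 => /eqP/eqP; by rewrite oner_eq0.
pose i0 := Ordinal dim_gt0.
pose X := vbasis (fullv : {vspace K}).
pose tau := fun x : F => coord X i0 (x : K).
have [z prim_z] := C_prim_root_exists (prime_gt0 pr_p).
exists (fun t => z ^+ (val (tau t))); split.
- move=> s t; rewrite -exprD /tau.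
  have -> : coord X i0 ((s + t : F) : K) = coord X i0 (s : K) + coord X i0 (t : K).
    by rewrite -linearD.
  by rewrite valFpD // (prim_expr_mod prim_z).
- move=> t; rewrite normrX.
  suff -> : `|z| = 1 by rewrite expr1n.
  apply/eqP; rewrite -(pexpr_eq1 (prime_gt0 pr_p)) ?normr_ge0 //.
  by rewrite -normrX (prim_expr_order prim_z) normr1.
- exists (X`_i0 : K); rewrite /tau coord_free ?eqxx; last exact: basis_free (vbasisP _).
  rewrite -(prim_order_dvd prim_z).
  have H1 : (val (true%:R : 'F_p) = 1 %% p)%N by exact: (val_Fp_nat pr_p 1).
  rewrite H1 modn_small ?prime_gt1 //.
  by rewrite dvdn1; apply/eqP => p1; rewrite p1 in pr_p.
Qed.


Section Chars.
Variables (F : finFieldType) (v n : nat).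
Local Notation mono := (mono v n).
Local Notation Rq := (Rq F v n).
Variable chi : F -> algC.
Hypothesis chiD : forall s t, chi (s + t) = chi s * chi t.
Hypothesis chiN : forall t, `|chi t| = 1.
Hypothesis chiU : exists u, chi u != 1.

Lemma chi_neq0 t : chi t != 0.
Proof. by rewrite -normr_eq0 chiN oner_eq0. Qed.

Lemma chi0 : chi 0 = 1.
Proof.
by apply: (mulfI (chi_neq0 0)); rewrite mulr1 -chiD addr0.
Qed.

Lemma chiNN t : chi (- t) * chi t = 1.
Proof. by rewrite -chiD addNr chi0. Qed.

Lemma chi_triv t : (forall c, chi (c * t) = 1) -> t = 0.
Proof.
move=> H; apply/eqP; apply/negPn/negP => Ht; have [u Hu] := chiU.
by move/negP: Hu; apply; rewrite -(H (u / t)) mulfVK.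
Qed.

Definition rpair (a x : Rq) : F := \sum_m a m * x m.

Lemma pairC a x : rpair a x = rpair x a.
Proof. by apply: eq_bigr => m _; rewrite mulrC. Qed.

Lemma pairDr a x y : rpair a (x + y) = rpair a x + rpair a y.
Proof. by rewrite /rpair -big_split; apply: eq_bigr => m _; rewrite /= !ffunE mulrDr. Qed.

Lemma pairBr a x y : rpair a (x - y) = rpair a x - rpair a y.
Proof. by rewrite /rpair -sumrB; apply: eq_bigr => m _; rewrite subE mulrBr. Qed.

Lemma pairZr a c x : rpair a (c *: x) = c * rpair a x.
Proof. by rewrite /rpair mulr_sumr; apply: eq_bigr => m _; rewrite scaleE mulrCA. Qed.

Lemma pair0r a : rpair a 0 = 0.
Proof. by rewrite -(subrr (0 : Rq)) pairBr subrr. Qed.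

Lemma pairNl a x : rpair (- a) x = - rpair a x.
Proof. by rewrite pairC -sub0r pairBr pair0r sub0r pairC. Qed.

Lemma pair_delta a m : rpair a (delta F m) = a m.
Proof.
rewrite /rpair (bigD1 m) //= big1 ?addr0 => [|k /negbTE km]; first by rewrite ffunE eqxx mulr1.
by rewrite ffunE km mulr0.
Qed.

Lemma pair_eq0 x : [forall a, rpair x a == 0] = (x == 0).
Proof.
apply/forallP/eqP => [H|-> a]; last by rewrite pairC pair0r.
by apply/ffunP => m; rewrite zeroE -pair_delta; apply/eqP.
Qed.

Definition subsp (H : {set Rq}) :=
  [/\ 0 \in H, forall x y, x \in H -> y \in H -> x - y \in H &
      forall c x, x \in H -> c *: x \in H].

Lemma subspT : subsp [set: Rq].
Proof. by split=> *; rewrite inE. Qed.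

Lemma sum_char (H : {set Rq}) (phi : Rq -> algC) y0 :
  (forall x y, phi (x + y) = phi x * phi y) ->
  (forall x y, x \in H -> y \in H -> x - y \in H) ->
  y0 \in H -> phi y0 != 1 -> \sum_(h in H) phi h = 0.
Proof.
move=> phiD HB y0H phiy.
have H0 : 0 \in H by rewrite -(subrr y0) HB.
have E : \sum_(h in H) phi h = (\sum_(h in H) phi h) * phi y0.
  rewrite mulr_suml (reindex_inj (addIr y0)) /=.
  apply: eq_big => [h|h _]; last exact: phiD.
  apply/idP/idP => hH; first by rewrite -(addrK y0 h) HB.
  by rewrite -[y0]opprK HB // -sub0r HB.
move/eqP: E; rewrite -subr_eq0 -{1}(mulr1 (\sum_(h in H) phi h)) -mulrBr mulf_eq0.
by rewrite subr_eq0 (eq_sym 1) (negbTE phiy) orbF => /eqP.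
Qed.

Lemma sum_pair (H : {set Rq}) a : subsp H ->
  \sum_(h in H) chi (rpair a h) = if [forall h in H, rpair a h == 0] then (#|H|)%:R else 0.
Proof.
case=> H0 HB HZ; case: ifP => [/forall_inP Hall|].
  by rewrite (eq_bigr (fun _ => 1)) ?sumr_const // => h hH; rewrite (eqP (Hall h hH)) chi0.
move/negbT; rewrite negb_forall_in => /exists_inP [z zH /negbTE Hz].
have [u Hu] := chiU.
apply: (sum_char (y0 := (u / rpair a z) *: z)) => //.
- by move=> x y; rewrite pairDr chiD.
- exact: HZ.
- by rewrite pairZr mulfVK ?Hz.
Qed.

Lemma sum_setT (G : Rq -> algC) : \sum_x G x = \sum_(x in [set: Rq]) G x.
Proof. by apply: eq_bigl => x; rewrite inE. Qed.

Lemma sum_pairT x : \sum_a chi (rpair a x) = if x == 0 then (#|[set: Rq]|)%:R else 0.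
Proof.
rewrite sum_setT (eq_bigr (fun a => chi (rpair x a))) => [|a _]; last by rewrite pairC.
rewrite sum_pair; last exact: subspT.
suff -> : [forall h in [set: Rq], rpair x h == 0] = (x == 0) by [].
rewrite -pair_eq0; apply/forall_inP/forallP => H a; first exact: H (in_setT a).
by move=> _; apply: H.
Qed.

Definition perp (H : {set Rq}) := [set a | [forall h in H, rpair a h == 0]].

Lemma card_perp (H : {set Rq}) : subsp H -> (#|perp H| * #|H| = #|[set: Rq]|)%N.
Proof.
move=> sH; have H0 : 0 \in H by case: sH.
apply/eqP; rewrite -(eqr_nat algC) natrM.
pose D := \sum_a \sum_(h in H) chi (rpair a h).
have E1 : D = (#|perp H|)%:R * (#|H|)%:R.
  rewrite /D (eq_bigr (fun a => if a \in perp H then (#|H|)%:R else 0)) => [|a _].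
    by rewrite -big_mkcond sumr_const mulr_natl.
  by rewrite sum_pair // inE.
have E2 : D = (#|[set: Rq]|)%:R.
  rewrite /D exchange_big /= (eq_bigr (fun h => if h == 0 then (#|[set: Rq]|)%:R else 0)).
    rewrite (bigD1 (0 : Rq) H0) /= eqxx big1 ?addr0 // => h /andP [_ /negbTE ->].
    by []. 
  by move=> h _; rewrite sum_pairT.
by rewrite -E1 -E2.
Qed.

Lemma char_surj (psi : Rq -> algC) : (forall x, `|psi x| = 1) ->
  (forall x y, psi (x + y) = psi x * psi y) -> exists a, forall x, psi x = chi (rpair a x).
Proof.
move=> psiN psiD.
have psi0 : psi 0 = 1.
  have psin0 : psi 0 != 0 by rewrite -normr_eq0 psiN oner_eq0.
  by apply: (mulfI psin0); rewrite mulr1 -psiD addr0.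
case: (boolP [exists a, [forall x, psi x * chi (rpair a x) == 1]]) => [/existsP [a /forallP Ha]|].
  exists (- a) => x; apply: (mulIf (chi_neq0 (rpair a x))).
  by rewrite (eqP (Ha x)) pairNl chiNN.
rewrite negb_exists => /forallP Hn.
pose T := \sum_x \sum_a psi x * chi (rpair a x).
have E1 : T = (#|[set: Rq]|)%:R.
  rewrite /T (eq_bigr (fun x => if x == 0 then (#|[set: Rq]|)%:R else 0)).
    rewrite (bigD1 (0 : Rq)) //= eqxx big1 ?addr0 // => h /negbTE ->; by [].
  by move=> x _; rewrite -mulr_sumr sum_pairT; case: eqP => [->|]; rewrite ?psi0 ?mul1r ?mulr0.
have E2 : T = 0.
  rewrite /T exchange_big big1 // => a _.
  move: (Hn a); rewrite negb_forall => /existsP [x Hx].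
  rewrite sum_setT; apply: (sum_char (y0 := x)) => //.
  - by move=> y z; rewrite psiD pairDr chiD mulrACA.
  - by move=> *; rewrite inE.
move: E1; rewrite E2 => /eqP; rewrite eq_sym pnatr_eq0 cardsT => /eqP H.
by have := card0_eq H (0 : Rq).
Qed.

End Chars.


Section Count.
Variables (F : finFieldType) (v n : nat).
Local Notation mono := (mono v n).
Local Notation Rq := (Rq F v n).

Lemma subspD (H : {set Rq}) x y : subsp H -> x \in H -> y \in H -> x + y \in H.
Proof.
case=> H0 HB _ xH yH; rewrite -[y]opprK -[- y]sub0r HB //; exact: HB.
Qed.

Lemma span_sub (H : {set Rq}) x : subsp H -> (x \in <<enum H>>%VS) = (x \in H).
Proof.
move=> sH; apply/idP/idP => [xS|xH]; last by apply: memv_span; rewrite mem_enum.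
have := coord_span (X := in_tuple (enum H)) xS => ->.
apply: (big_ind (fun x => x \in H)); first by case: sH.
  by move=> a b; apply: subspD.
move=> i _; case: sH => _ _ HZ; apply: HZ.
by rewrite -mem_enum; apply: mem_nth; exact: ltn_ord i.
Qed.

Lemma card_subsp (H : {set Rq}) : subsp H -> #|H| = (#|F| ^ \dim <<enum H>>)%N.
Proof.
move=> sH; rewrite -card_vspace; apply: eq_card => x.
exact: (esym (span_sub x sH)).
Qed.

Lemma inj_count (I K : {set Rq}) b : subsp I -> I \subset K -> subsp K -> b \in K -> b \notin I ->
  (#|F| * #|I| <= #|K|)%N.
Proof.
move=> sI IK sK bK bI.
pose f := fun p : F * Rq => p.1 *: b + p.2.
have -> : (#|F| * #|I| = #|setX [set: F] I|)%N by rewrite cardsX cardsT.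
rewrite -(card_in_imset (f := f)).
  apply: subset_leq_card; apply/subsetP => _ /imsetP [[c z] /setXP [_ zI] ->].
  rewrite /f /=; apply: subspD => //; first by case: sK => _ _; apply.
  exact: (subsetP IK).
move=> [c z] [c' z'] /setXP [_ zI] /setXP [_ z'I]; rewrite /f /= => E.
have Ec : c = c'.
  apply/eqP; apply/negPn/negP => Hc; move/negP: bI; apply.
  have : (c - c') *: b = z' - z by rewrite scalerBl -[c *: b](addrK z) E addrAC [c' *: b + z']addrC addrK.
  move=> H; rewrite -[b](scalerK (a := c - c')) ?subr_eq0 // H.
  by case: sI => _ HB HZ; apply: HZ; apply: HB.
by move: E; rewrite Ec => /addrI ->.
Qed.

Lemma fiber_count (S : {set Rq}) a : subsp S ->
  (#|S| <= #|F| * #|[set z in S | rpair a z == 0%R]|)%N.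
Proof.
move=> sS; set K := [set z in S | rpair a z == 0].
case: (boolP [exists w in S, rpair a w != 0]) => [/exists_inP [w wS Hw]|].
  pose w' := (rpair a w)^-1 *: w.
  have w'S : w' \in S by case: sS => _ _; apply.
  have pw' : rpair a w' = 1 by rewrite pairZr mulVf.
  pose g := fun z : Rq => (rpair a z, z - rpair a z *: w').
  have -> : (#|F| * #|K| = #|setX [set: F] K|)%N by rewrite cardsX cardsT.
  rewrite -(card_in_imset (f := g) (D := mem S)).
    apply: subset_leq_card; apply/subsetP => _ /imsetP [z zS ->].
    rewrite /g !inE /=.
    case: sS => _ HB HZ; rewrite HB // ?HZ //=.
    by rewrite pairBr pairZr pw' mulr1 subrr.
  move=> z z' _ _ [E1 E2]; move: E2; rewrite E1; exact: addIr.
rewrite negb_exists_in => /forall_inP H.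
have -> : K = S.
  by apply/setP => z; rewrite inE; case: (boolP (z \in S)) => // zS; rewrite (negbNE (H z zS)).
by apply: leq_pmull; apply: ltnW; exact: finNzRing_gt1.
Qed.

End Count.


Lemma subsub (V : zmodType) (x y p q : V) : (x - y) - (p - q) = (x - p) - (y - q).
Proof. by rewrite !opprB -!addrA; congr (_ + _); rewrite addrCA [RHS]addrCA; congr (_ + _); exact: addrC. Qed.

Unset Implicit Arguments. Set Strict Implicit.

Theorem lemma6p3 (F : finFieldType) (v n : nat) (Hv : (1 <= v)%N) (Hn : (1 <= n)%N)
    (I : {set Rq F v n}) (HI : is_ideal I) :
  exists s : seq {ffun Rq F v n -> algC},
    [/\ uniq s,
        (forall psi, psi \in s <-> (is_add_char psi /\ max_ideal_in_ker I psi)) &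
        (size s)%:R =
          (#|[set: Rq F v n]|%:R / #|I|%:R : rat) *
          (if dim_soc I == 0%N then 1
           else if dim_soc I == 1%N then 1 - (#|F|%:R)^-1 else 0)].
Proof.
have [chi [chiD chiN chiU]] := chi0_exists F.
pose Phi := fun a : Rq F v n => [ffun x : Rq F v n => chi (rpair a x)].
have [S HS] : {S : {set Rq F v n} | soc_pre I = S} by exists (soc_pre I).
have sI : subsp I.
  split; [exact: ideal0 HI | by move=> x y; apply: idealB | by move=> c x; apply: idealZ].
have sS : subsp S.
  split.
  - by rewrite -HS inE; apply/forallP => i; rewrite Rmul0r ideal0.
  - move=> x y; rewrite -HS !inE => /forallP Hx /forallP Hy; apply/forallP => i.
    by rewrite RmulBr idealB.
  - move=> c x; rewrite -HS !inE => /forallP Hx; apply/forallP => i.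
    by rewrite RmulZr idealZ.
have IS : I \subset S.
  by apply/subsetP => x xI; rewrite -HS inE; apply/forallP => i; apply: Rmul_mulr.
pose A := [set a | (a \in perp I) && ~~ [exists b in S :\: I, rpair a b == 0]].
exists (map Phi (enum A)); split.
- rewrite map_inj_uniq ?enum_uniq // => a b /ffunP E.
  apply/eqP; rewrite -subr_eq0 -pair_eq0; apply/forallP => x; apply/eqP.
  apply: (chi_triv chiU) => c.
  rewrite -pairZr pairC pairBr chiD.
  have := E (c *: x); rewrite !ffunE pairC [rpair b _]pairC => ->.
  by rewrite mulrC chiNN.
- move=> psi; split.
  + case/mapP => a; rewrite mem_enum inE => /andP [aI aN] ->.
    split; first by split => [x|x y]; rewrite !ffunE ?chiN // pairDr chiD.
    split.
      move=> x xI; rewrite /in_ker ffunE.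
      by move: aI; rewrite inE => /forall_inP /(_ x xI) /eqP ->; rewrite chi0.
    move=> J HJ Jker; apply/subsetP => b bJ; apply/negPn/negP => bI.
    have [a' [a'J a'I a'S]] := descent HI HJ bJ bI.
    move/negP: aN; apply; apply/exists_inP; exists a'.
      by rewrite inE a'I /= -HS inE; apply/forallP => i; exact: a'S i.
    apply/eqP; apply: (chi_triv chiU) => c; rewrite -pairZr.
    by have := Jker _ (idealZ Hn c HJ a'J); rewrite /in_ker ffunE.
  + case=> [[psiN psiD] [Hker Hmax]].
    have [a Ha] := char_surj chiD chiN chiU psiN psiD.
    have psiE : psi = Phi a by apply/ffunP => x; rewrite ffunE Ha.
    have aI : forall h, h \in I -> rpair a h = 0.
      move=> h hI; apply: (chi_triv chiU) => c; rewrite -pairZr -Ha.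
      exact: Hker _ (idealZ Hn c HI hI).
    apply/mapP; exists a => //; rewrite mem_enum inE; apply/andP; split.
      by rewrite inE; apply/forall_inP => h hI; apply/eqP; exact: aI.
    apply/negP => /exists_inP [b]; rewrite -HS !inE => /andP [bI /forallP bS] /eqP pb.
    pose J := [set y : Rq F v n | [exists c : F, y - c *: b \in I]].
    have HJ : is_ideal J.
      split.
      * rewrite inE; apply/existsP; exists 0; rewrite scale0r subr0; exact: ideal0 HI.
      * move=> x y; rewrite !inE => /existsP [cx Hx] /existsP [cy Hy].
        apply/existsP; exists (cx - cy).
        by rewrite scalerBl subsub idealB.
      * move=> r x; rewrite !inE => /existsP [cx Hx].
        apply/existsP; exists (cx * r (mono0 v Hn)).
        have -> : Rmul r x - (cx * r (mono0 v Hn)) *: b =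
            Rmul r (x - cx *: b) + cx *: (Rmul r b - r (mono0 v Hn) *: b).
          by rewrite RmulBr RmulZr scalerBr scalerA addrA subrK.
        apply: idealD => //; first exact: Rmul_mulr.
        by apply: idealZ => //; apply: socle_mul.
    have Jker : forall x, x \in J -> in_ker psi x.
      move=> x; rewrite inE => /existsP [c Hc]; rewrite /in_ker Ha.
      have -> : rpair a x = rpair a (x - c *: b) + c * rpair a b by rewrite pairBr pairZr subrK.
      by rewrite pb mulr0 addr0 (aI _ Hc) chi0.
    have := Hmax J HJ Jker => /subsetP /(_ b) H; move/negP: bI; apply; apply: H.
    rewrite inE; apply/existsP; exists 1; rewrite scale1r subrr; exact: ideal0 HI.
- rewrite size_map -cardE /dim_soc HS.
  set q := #|F|; set dI := \dim <<enum I>>%VS; set dS := \dim <<enum S>>%VS.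
  have cI := card_subsp sI; have cS := card_subsp sS.
  have PI := card_perp chiD chiN chiU sI; have PS := card_perp chiD chiN chiU sS.
  have q1 : (1 < q)%N by exact: finNzRing_gt1.
  have I0 : (0 < #|I|)%N by rewrite card_gt0; apply/set0Pn; exists 0; exact: ideal0 HI.
  have dIS : (dI <= dS)%N.
    by rewrite -(leq_exp2l _ _ q1) -cI -cS; apply: subset_leq_card.
  pose K a := [set z in S | rpair a z == 0].
  have memK a z : (z \in K a) = (z \in S) && (rpair a z == 0) by rewrite /K in_set.
  have sK a : subsp (K a).
    case: sS => S0 SB SZ; split.
    - by rewrite inE S0 pair0r eqxx.
    - move=> x y; rewrite !inE => /andP [xS /eqP px] /andP [yS /eqP py].
      by rewrite SB // pairBr px py subrr eqxx.
    - move=> c x; rewrite !memK => /andP [xS /eqP px].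
      by rewrite SZ // pairZr px mulr0 eqxx.
  have IK a : a \in perp I -> I \subset K a.
    move=> aI; apply/subsetP => z zI; rewrite memK (subsetP IS) //=.
    by move: aI; rewrite inE => /forall_inP; apply.
  have KS a : K a \subset S by apply/subsetP => z; rewrite memK => /andP [].
  have Inz : (#|I|%:R : rat) != 0 by rewrite pnatr_eq0 -lt0n.
  have qnz : (q%:R : rat) != 0 by rewrite pnatr_eq0; lia.
  case: ifP => [/eqP d0 | d0].
    have -> : A = perp I.
      apply/setP => a; rewrite inE; case: (boolP (a \in perp I)) => //= aI.
      apply/negP => /exists_inP [b]; rewrite inE => /andP [bI bS] _.
      have : (#|I| < #|S|)%N.
        by apply: proper_card; rewrite properE IS; apply/subsetPn; exists b.
      rewrite cI cS ltn_exp2l //; lia.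
    by rewrite mulr1 -PI natrM mulfK.
  case: ifP => [/eqP d1 | d2].
    have cSI : #|S| = (q * #|I|)%N.
      rewrite cS cI -expnS; apply: congr1; move: d1 dIS; rewrite /dS /dI; lia.
    have claim a : a \in perp I -> [exists b in S :\: I, rpair a b == 0] = (a \in perp S).
      move=> aI; apply/idP/idP.
        move=> /exists_inP [b]; rewrite inE => /andP [bI bS] pb.
        have bK : b \in K a by rewrite memK bS.
        have := inj_count sI (IK a aI) (sK a) bK bI; rewrite -cSI => HK.
        have E : #|K a| = #|S| by apply/eqP; rewrite eqn_leq HK subset_leq_card.
        have /subset_cardP := E => /(_ (KS a)) EKS.
        rewrite inE; apply/forall_inP => z zS.
        by move: (EKS z); rewrite zS memK => /andP [].
      move=> aS; have : ~~ (S \subset I).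
        apply/negP => /subset_leq_card; rewrite cSI.
        have : (2 * #|I| <= q * #|I|)%N by rewrite leq_mul2r q1 orbT.
        lia.
      move/subsetPn => [b bS bI]; apply/exists_inP; exists b; first by rewrite inE bI.
      by move: aS; rewrite inE => /forall_inP; apply.
    have PSI : perp S \subset perp I.
      apply/subsetP => a; rewrite !inE => /forall_inP H; apply/forall_inP => h hI.
      by apply: H; rewrite (subsetP IS).
    have -> : A = perp I :\: perp S :> {set Rq F v n}.
      apply/setP => a; rewrite [a \in A]inE in_setD.
      by case: (boolP (a \in perp I)) => aI; rewrite ?andbF ?andbT //= claim.
    rewrite cardsD (setIidPr PSI) natrB ?subset_leq_card //.
    rewrite -PI natrM mulfK // mulrBr mulr1; congr (_ - _).
    apply: (mulIf qnz); rewrite mulfVK //; apply: (mulIf Inz).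
    rewrite -!natrM; congr (_%:R); rewrite PI -PS cSI; lia.
  have d2' : (dI.+2 <= dS)%N by lia.
  have -> : A = set0.
    apply/setP => a; rewrite inE in_set0; case: (boolP (a \in perp I)) => //= aI.
    rewrite negbK.
    have HF := fiber_count a sS; rewrite -/(K a) in HF.
    have H2 : (q * (q * #|I|) <= #|S|)%N.
      by rewrite cS cI -!expnS leq_exp2l.
    have H3 : (q * #|I| <= #|K a|)%N.
      by rewrite -(leq_pmul2l (ltnW q1)); apply: leq_trans H2 HF.
    have : ~~ (K a \subset I).
      apply/negP => /subset_leq_card.
      have : (2 * #|I| <= q * #|I|)%N by rewrite leq_mul2r q1 orbT.
      lia.
    move/subsetPn => [b]; rewrite memK => /andP [bS pb] bI.
    by apply/exists_inP; exists b; rewrite // inE bI.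
  by rewrite cards0 mulr0.
Qed.
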